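(* Let $p_1,\dots,p_n\ge0$ and unit vectors $\vec a_1,\dots,\vec a_n\in\mathbb{R}^3$ satisfy $\sum_ip_i=2$ and $\sum_ip_i\vec a_i=\vec0$, and let $f:\mathbb{R}^3\to\mathbb{R}$, $f(\vec x)=\sum_ip_i\,\Theta(\vec x\cdot\vec a_i)$. Then (1) $f(\vec x)=\frac12\sum_ip_i\,|\vec a_i\cdot\vec x|$ for all $\vec x\in\mathbb{R}^3$; in particular $f$ is continuous and $f(\alpha\vec x)=|\alpha|f(\vec x)$ for all $\alpha\in\mathbb{R}$ (so $f(-\vec x)=f(\vec x)$); (2) $\sum_{s_x,s_y,s_z=\pm1}f(\vec v_{s_xs_ys_z})\le 8$.
   Context: $\Theta(x)=x$ for $x\ge0$ and $\Theta(x)=0$ for $x<0$. For $s_x,s_y,s_z\in\{+1,-1\}$, $\vec v_{s_xs_ys_z}=(s_x,s_y,s_z)^T$. *)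

(* Defs.v *)
From HB Require Import structures.
From mathcomp Require Import all_boot all_order all_algebra.
From mathcomp Require Import all_classical all_reals all_analysis.
Set Implicit Arguments. Unset Strict Implicit. Unset Printing Implicit Defensive.
Import Order.TTheory GRing.Theory Num.Theory.
Import numFieldNormedType.Exports.
Local Open Scope ring_scope.

Definition Theta {R : realType} (x : R) : R := if 0 <= x then x else 0.

Definition dot3 {R : realType} (x y : 'rV[R]_3) : R := \sum_(k < 3) x 0 k * y 0 k.

Definition sgnb {R : realType} (b : bool) : R := if b then 1 else -1.

Definition vsign {R : realType} (sx sy sz : bool) : 'rV[R]_3 :=
  \row_(k < 3) [:: sgnb sx; sgnb sy; sgnb sz]`_k.

(* Main.v *)
Require Import Defs.
From HB Require Import structures.
From mathcomp Require Import all_boot all_order all_algebra.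
From mathcomp Require Import all_classical all_reals all_analysis.
From mathcomp Require Import lra.
Import Order.TTheory GRing.Theory Num.Theory.
Import numFieldNormedType.Exports.
Local Open Scope ring_scope.

Lemma sum_cont (R : realType) (m : nat) (g : 'I_m -> 'rV[R]_3 -> R) :
  (forall i, continuous (g i)) -> continuous (fun x => \sum_(i < m) g i x).
Proof.
elim: m g => [|m IH] g hg.
  under eq_fun do rewrite big_ord0. exact: cst_continuous.
under eq_fun do rewrite big_ord_recr /=.
move=> x; apply: continuousD; last exact: hg.
exact: (IH (fun i => g (widen_ord (leqnSn m) i))).
Qed.

Lemma dot3_cont (R : realType) (u : 'rV[R]_3) : continuous (fun x => dot3 u x).
Proof.
rewrite /dot3; apply: (@sum_cont R 3 (fun k (x : 'rV[R]_3) => u 0 k * x 0 k)) => k x.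
apply: continuousM; first exact: cst_continuous.
exact: coord_continuous.
Qed.

Lemma dot3C (R : realType) (u v : 'rV[R]_3) : dot3 u v = dot3 v u.
Proof. by rewrite /dot3; apply: eq_bigr => k _; rewrite mulrC. Qed.

Lemma dot3Z (R : realType) (u v : 'rV[R]_3) (c : R) : dot3 u (c *: v) = c * dot3 u v.
Proof.
rewrite /dot3 mulr_sumr; apply: eq_bigr => k _; rewrite mxE; lra.
Qed.

Lemma dot3E (R : realType) (u v : 'rV[R]_3) :
  dot3 u v = u 0 0 * v 0 0 + u 0 1 * v 0 1 + u 0 2%:R * v 0 2%:R.
Proof.
rewrite /dot3 !big_ord_recr big_ord0 /= add0r.
by congr (_ * _ + _ * _ + _ * _); congr (_ 0 _); apply/val_inj.
Qed.

Lemma ThetaE (R : realType) (t : R) : Theta t = 2^-1 * (t + `|t|).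
Proof.
rewrite /Theta; case: ifP => h.
  rewrite ger0_norm //; lra.
rewrite ltr0_norm ?ltNge ?h //; lra.
Qed.

Lemma abs_bound (R : realType) (t : R) : `|t| <= (t ^+ 2 + 1) / 2.
Proof.
have := sqr_ge0 (`|t| - 1); rewrite -[t ^+ 2]real_normK ?num_real //.
move=> h; nra.
Qed.

Lemma eight (R : realType) (x y z : R) : x ^+ 2 + y ^+ 2 + z ^+ 2 = 1 ->
  `|x + y + z| + `|x + y - z| + `|x - y + z| + `|x - y - z|
  + `|- x + y + z| + `|- x + y - z| + `|- x - y + z| + `|- x - y - z| <= 8.
Proof.
move=> h.
have := @abs_bound _ (x + y + z); have := @abs_bound _ (x + y - z);
have := @abs_bound _ (x - y + z); have := @abs_bound _ (x - y - z);
have := @abs_bound _ (- x + y + z); have := @abs_bound _ (- x + y - z);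
have := @abs_bound _ (- x - y + z); have := @abs_bound _ (- x - y - z).
nra.
Qed.

Theorem mainTheorem5 (R : realType) (n : nat) (p : 'I_n -> R) (a : 'I_n -> 'rV[R]_3)
  (hp : forall i, 0 <= p i)
  (ha : forall i, dot3 (a i) (a i) = 1)
  (hsum : \sum_(i < n) p i = 2)
  (hbal : \sum_(i < n) p i *: a i = 0)
  (f : 'rV[R]_3 -> R)
  (hf : forall x, f x = \sum_(i < n) p i * Theta (dot3 x (a i))) :
  ((forall x, f x = 2^-1 * \sum_(i < n) p i * `|dot3 (a i) x|)
   /\ continuous f
   /\ (forall (alpha : R) x, f (alpha *: x) = `|alpha| * f x)
   /\ (forall x, f (- x) = f x))
  /\ \sum_(sx : bool) \sum_(sy : bool) \sum_(sz : bool) f (vsign sx sy sz) <= 8.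
Proof.
have H1 : forall x, f x = 2^-1 * \sum_(i < n) p i * `|dot3 (a i) x|.
  move=> x; rewrite hf.
  have h0 : \sum_(i < n) p i * dot3 x (a i) = 0.
    transitivity (dot3 x (\sum_(i < n) p i *: a i)); last first.
      by rewrite hbal /dot3 big1 // => k _; rewrite mxE mulr0.
    rewrite /dot3.
    under [RHS]eq_bigr do rewrite summxE mulr_sumr.
    rewrite exchange_big /=; apply: eq_bigr => i _.
    rewrite mulr_sumr; apply: eq_bigr => k _; rewrite mxE; lra.
  rewrite mulr_sumr.
  transitivity (\sum_(i < n) (2^-1 * (p i * dot3 x (a i)) + 2^-1 * (p i * `|dot3 (a i) x|))).
    by apply: eq_bigr => i _; rewrite ThetaE dot3C; lra.
  by rewrite big_split /= -mulr_sumr h0 mulr0 add0r.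
split.
  split; first exact: H1.
  split.
    have -> : f = (fun x => 2^-1 * \sum_(i < n) p i * `|dot3 (a i) x|).
      by apply: funext => x; rewrite H1.
    move=> x; apply: (@continuousM _ _ (fun _ => 2^-1) (fun x => \sum_(i < n) p i * `|dot3 (a i) x|)); first exact: cst_continuous.
    apply: (@sum_cont R n (fun i (y : 'rV[R]_3) => p i * `|dot3 (a i) y|)) => i y.
    apply: (@continuousM _ _ (fun _ => p i) (fun y => `|dot3 (a i) y|)); first exact: cst_continuous.
    have hh := continuous_comp (@dot3_cont R (a i) y) (@norm_continuous R R^o (dot3 (a i) y)).
    exact: hh.


  have hZ : forall (alpha : R) x, f (alpha *: x) = `|alpha| * f x.
    move=> al x; rewrite !H1 [RHS]mulrCA; congr (_ * _); rewrite mulr_sumr.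
    by apply: eq_bigr => i _; rewrite dot3Z normrM mulrCA.
  split; first exact: hZ.
  move=> x; rewrite -scaleN1r hZ normrN normr1 mul1r //.
under eq_bigr do under eq_bigr do under eq_bigr do rewrite H1.
rewrite !big_bool /=.
set F := fun sx sy sz => 2^-1 * \sum_(i < n) p i * `|dot3 (a i) (vsign sx sy sz)|.
have -> : forall sx sy sz, 2^-1 * \sum_(i < n) p i * `|dot3 (a i) (vsign sx sy sz)| = F sx sy sz by [].
rewrite /F -!mulrDr -!big_split /=.
have hb : forall i, p i * `|dot3 (a i) (vsign true true true)| +
          p i * `|dot3 (a i) (vsign true true false)| +
          (p i * `|dot3 (a i) (vsign true false true)| +
           p i * `|dot3 (a i) (vsign true false false)|) +
          (p i * `|dot3 (a i) (vsign false true true)| +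
           p i * `|dot3 (a i) (vsign false true false)| +
          (p i * `|dot3 (a i) (vsign false false true)| +
           p i * `|dot3 (a i) (vsign false false false)|)) <= p i * 8.
  move=> i; rewrite -!mulrDr ler_wpM2l //.
  have := @eight R (a i 0 0) (a i 0 1) (a i 0 2%:R).
  rewrite !dot3E /vsign !mxE /= /sgnb.
  have := ha i; rewrite dot3E => hai.
  move=> h; have := h ltac:(rewrite !expr2; lra).
  set A := a i 0 0; set B := a i 0 1; set C := a i 0 2%:R.
  have e : forall u v w : R, (u * 1 + v * 1 + w * 1 = u + v + w) /\ True by move=> *; split=>//; lra.
  rewrite !mulr1 !mulrN1.
  have -> : - A + B + C = -A + B + C by [].
  by rewrite !addrA; lra.
have hh := ler_sum (index_enum 'I_n) (P := xpredT) (fun i _ => hb i).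
rewrite -mulr_suml hsum in hh.
lra.
Qed.
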